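(* Let $R$ be a unital associative ring and $n\ge1$. Let ${\cal P}^0_{LR}$ be the group of pairs $(P_1,P_2)$ of $n\times n$ permutation matrices each of which fixes the first standard basis vector, acting on $M_n(R)$ by $(P_1,P_2)(M)=P_1^{-1}MP_2$. Then ${\rm dom}(\Phi)$ and ${\rm dom}(\Psi)$ are invariant under this action, and $\Phi$ and $\Psi$ commute with it: $\Phi(P_1^{-1}AP_2)=P_1^{-1}\Phi(A)P_2$ for $A\in{\rm dom}(\Phi)$ and $\Psi(P_1^{-1}AP_2)=P_1^{-1}\Psi(A)P_2$ for $A\in{\rm dom}(\Psi)$, for all $(P_1,P_2)\in{\cal P}^0_{LR}$.
   Context: $R^*$: units of $R$. $M_n^*(R)$: invertible $n\times n$ matrices; $M_n^\star(R)$: matrices with all entries in $R^*$. $J_1(M)=M^{-1}$ on $M_n^*(R)$; $J_2(M)_{jk}=(M_{kj})^{-1}$ on $M_n^\star(R)$; $J=J_2\circ J_1$, where $g\circ f$ has domain $\{x\in{\rm dom}(f):f(x)\in{\rm dom}(g)\}$. $\widehat M_n(R)$: matrices whose first row and column consist of $1$'s. For $A=\{a_{j,k}\}\in M_n^\star(R)$, $\Lambda^L(A)_{j,k}=a_{1,1}a_{j,1}^{-1}a_{j,k}a_{1,k}^{-1}$. $\Phi(A)=J_2(\Lambda^L(A^{-1}))$ with ${\rm dom}(\Phi)={\rm dom}(J)\cap\widehat M_n(R)\cap M_n^\star(R)$, and $\Psi=J_2\circ\Phi\circ J_2$ with the natural composition domain. *)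

(* Defs.v *)
From HB Require Import structures.
From mathcomp Require Import all_boot all_order all_algebra all_fingroup.
From Stdlib Require Import ClassicalEpsilon.
Set Implicit Arguments. Unset Strict Implicit. Unset Printing Implicit Defensive.
Import GRing.Theory.
Local Open Scope ring_scope.

Definition is_inv (R : pzRingType) (n : nat) (M N : 'M[R]_n) : Prop :=
  M *m N = 1%:M /\ N *m M = 1%:M.

Definition invertible (R : pzRingType) (n : nat) (M : 'M[R]_n) : Prop :=
  exists N, is_inv M N.

(* J_1(M) = M^{-1} (meaningful on invertible M; the inverse is unique) *)
Definition J1 (R : pzRingType) (n : nat) (M : 'M[R]_n) : 'M[R]_n :=
  epsilon (inhabits M) (fun N => is_inv M N).

Definition all_units (R : unitRingType) (n : nat) (M : 'M[R]_n) : Prop :=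
  forall i j, M i j \is a GRing.unit.

Definition J2 (R : unitRingType) (n : nat) (M : 'M[R]_n) : 'M[R]_n :=
  \matrix_(j, k) (M k j)^-1.

(* dom(J) = dom(J2 o J1) *)
Definition dom_J (R : unitRingType) (n : nat) (M : 'M[R]_n) : Prop :=
  invertible M /\ all_units (J1 M).

Definition hatM (R : unitRingType) (n : nat) (M : 'M[R]_n.+1) : Prop :=
  (forall k, M ord0 k = 1) /\ (forall j, M j ord0 = 1).

Definition LambdaL (R : unitRingType) (n : nat) (A : 'M[R]_n.+1) : 'M[R]_n.+1 :=
  \matrix_(j, k) (A ord0 ord0 * (A j ord0)^-1 * A j k * (A ord0 k)^-1).

Definition Phi (R : unitRingType) (n : nat) (A : 'M[R]_n.+1) : 'M[R]_n.+1 :=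
  J2 (LambdaL (J1 A)).

Definition dom_Phi (R : unitRingType) (n : nat) (A : 'M[R]_n.+1) : Prop :=
  dom_J A /\ hatM A /\ all_units A.

Definition Psi (R : unitRingType) (n : nat) (A : 'M[R]_n.+1) : 'M[R]_n.+1 :=
  J2 (Phi (J2 A)).

Definition dom_Psi (R : unitRingType) (n : nat) (A : 'M[R]_n.+1) : Prop :=
  all_units A /\ dom_Phi (J2 A) /\ all_units (Phi (J2 A)).

Definition perm_fix_e1 (R : unitRingType) (n : nat) (P : 'M[R]_n.+1) : Prop :=
  exists s : 'S_n.+1, s ord0 = ord0 /\ P = perm_mx s.

Definition actLR (R : unitRingType) (n : nat) (P1 P2 M : 'M[R]_n.+1) : 'M[R]_n.+1 :=
  J1 P1 *m M *m P2.

(* Main.v *)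
Require Import Defs.
From HB Require Import structures.
From mathcomp Require Import all_boot all_order all_algebra all_fingroup.
From Stdlib Require Import ClassicalEpsilon.
Set Implicit Arguments. Unset Strict Implicit. Unset Printing Implicit Defensive.
Import GRing.Theory.
Local Open Scope ring_scope.

Definition Qm (R : unitRingType) (n : nat) (s t : 'S_n) (A : 'M[R]_n) : 'M[R]_n :=
  \matrix_(i, j) A (s i) (t j).

Lemma J1_inv (R : unitRingType) n (M : 'M[R]_n) : invertible M -> is_inv M (J1 M).
Proof. move=> H; rewrite /J1; exact: epsilon_spec. Qed.

Lemma inv_uniq (R : unitRingType) n (M N N' : 'M[R]_n) :
  is_inv M N -> is_inv M N' -> N = N'.
Proof.
move=> [H1 H2] [H3 H4].
by rewrite -[N]mulmx1 -H3 mulmxA H2 mul1mx.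
Qed.

Lemma J1_eq (R : unitRingType) n (M N : 'M[R]_n) : is_inv M N -> J1 M = N.
Proof. move=> H; have Hi : invertible M by exists N. exact: (inv_uniq (J1_inv Hi) H). Qed.

Lemma Q_inv (R : unitRingType) n (s t : 'S_n) (A N : 'M[R]_n) :
  is_inv A N -> is_inv (Qm s t A) (Qm t s N).
Proof.
move=> [H1 H2]; split; apply/matrixP=> i j.
- move/matrixP: H1 => /(_ (s i) (s j)); rewrite !mxE (inj_eq perm_inj) => E; rewrite -E.
  rewrite [RHS](reindex_inj (@perm_inj _ t)) /=; apply: eq_bigr => k _; by rewrite /Qm !mxE.
- move/matrixP: H2 => /(_ (t i) (t j)); rewrite !mxE (inj_eq perm_inj) => E; rewrite -E.
  rewrite [RHS](reindex_inj (@perm_inj _ s)) /=; apply: eq_bigr => k _; by rewrite /Qm !mxE.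
Qed.

Lemma J1_Q (R : unitRingType) n (s t : 'S_n) (A : 'M[R]_n) :
  invertible A -> J1 (Qm s t A) = Qm t s (J1 A).
Proof. move=> H; apply: J1_eq; apply: Q_inv; exact: J1_inv. Qed.

Lemma inv_Q (R : unitRingType) n (s t : 'S_n) (A : 'M[R]_n) :
  invertible A -> invertible (Qm s t A).
Proof. move=> [N H]; exists (Qm t s N); exact: Q_inv. Qed.

Lemma J2_Q (R : unitRingType) n (s t : 'S_n) (A : 'M[R]_n) :
  J2 (Qm s t A) = Qm t s (J2 A).
Proof. by apply/matrixP=> i j; rewrite !mxE. Qed.

Lemma Lam_Q (R : unitRingType) n (s t : 'S_n.+1) (A : 'M[R]_n.+1) :
  s ord0 = ord0 -> t ord0 = ord0 -> LambdaL (Qm s t A) = Qm s t (LambdaL A).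
Proof. by move=> Hs Ht; apply/matrixP=> i j; rewrite !mxE Hs Ht. Qed.

Lemma units_Q (R : unitRingType) n (s t : 'S_n) (A : 'M[R]_n) :
  all_units A -> all_units (Qm s t A).
Proof. by move=> H i j; rewrite mxE. Qed.

Lemma hat_Q (R : unitRingType) n (s t : 'S_n.+1) (A : 'M[R]_n.+1) :
  s ord0 = ord0 -> t ord0 = ord0 -> hatM A -> hatM (Qm s t A).
Proof.
by move=> Hs Ht [H1 H2]; split=> k; rewrite mxE ?Hs ?Ht.
Qed.

Lemma domPhi_Q (R : unitRingType) n (s t : 'S_n.+1) (A : 'M[R]_n.+1) :
  s ord0 = ord0 -> t ord0 = ord0 -> dom_Phi A -> dom_Phi (Qm s t A).
Proof.
move=> Hs Ht [[Hi Hu] [Hh Ha]]; split; [split|split].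
- exact: inv_Q.
- rewrite J1_Q //; exact: units_Q.
- exact: hat_Q.
- exact: units_Q.
Qed.

Lemma Phi_Q (R : unitRingType) n (s t : 'S_n.+1) (A : 'M[R]_n.+1) :
  s ord0 = ord0 -> t ord0 = ord0 -> dom_Phi A -> Phi (Qm s t A) = Qm s t (Phi A).
Proof.
move=> Hs Ht [[Hi Hu] _]; rewrite /Phi J1_Q // Lam_Q // J2_Q //.
Qed.

Lemma domPsi_Q (R : unitRingType) n (s t : 'S_n.+1) (A : 'M[R]_n.+1) :
  s ord0 = ord0 -> t ord0 = ord0 -> dom_Psi A -> dom_Psi (Qm s t A).
Proof.
move=> Hs Ht [H1 [H2 H3]]; split; first exact: units_Q.
rewrite J2_Q; split; first exact: domPhi_Q.
rewrite Phi_Q //; exact: units_Q.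
Qed.

Lemma Psi_Q (R : unitRingType) n (s t : 'S_n.+1) (A : 'M[R]_n.+1) :
  s ord0 = ord0 -> t ord0 = ord0 -> dom_Psi A -> Psi (Qm s t A) = Qm s t (Psi A).
Proof.
move=> Hs Ht [H1 [H2 H3]]; rewrite /Psi J2_Q Phi_Q // J2_Q //.
Qed.

Lemma act_Q (R : unitRingType) n (s1 s2 : 'S_n.+1) (A : 'M[R]_n.+1) :
  actLR (perm_mx s1) (perm_mx s2) A = Qm s1^-1 s2^-1 A.
Proof.
rewrite /actLR.
have -> : J1 (perm_mx s1 : 'M[R]_n.+1) = perm_mx s1^-1.
  apply: J1_eq; split; by rewrite -perm_mxM ?mulgV ?mulVg perm_mx1.
rewrite -row_permE -[s2 in perm_mx s2]invgK -col_permE.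
by apply/matrixP=> i j; rewrite !mxE.
Qed.

Theorem lemma4 (R : unitRingType) (n : nat) (P1 P2 : 'M[R]_n.+1) :
  perm_fix_e1 P1 -> perm_fix_e1 P2 ->
  (forall A, dom_Phi A -> dom_Phi (actLR P1 P2 A)) /\
  (forall A, dom_Psi A -> dom_Psi (actLR P1 P2 A)) /\
  (forall A, dom_Phi A -> Phi (actLR P1 P2 A) = actLR P1 P2 (Phi A)) /\
  (forall A, dom_Psi A -> Psi (actLR P1 P2 A) = actLR P1 P2 (Psi A)).
Proof.
move=> [s1 [H1 ->]] [s2 [H2 ->]].
have K1 : (s1^-1)%g ord0 = ord0 by rewrite -{1}H1 permK.
have K2 : (s2^-1)%g ord0 = ord0 by rewrite -{1}H2 permK.
split; [|split; [|split]] => A HA; rewrite !act_Q.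
- exact: domPhi_Q.
- exact: domPsi_Q.
- exact: Phi_Q.
- exact: Psi_Q.
Qed.
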